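(* Let $\mathcal A$ be a finite set, let $R:\mathcal A\to\mathbb R$ and $\hat R_t:\mathcal A\to\mathbb R$ be arbitrary functions, let $a^*\in\mathcal A$ maximize $R$, and let $\gamma_t>0$. Define $\Delta(a)=R(a^* )-R(a)$ and $\hat\Delta_t(a)=\hat R_t(a^* )-\hat R_t(a)$, and for a distribution $\rho$ on $\mathcal A$, $\Delta(\rho)=\sum_a\rho(a)\Delta(a)$, $\hat\Delta_t(\rho)=\sum_a\rho(a)\hat\Delta_t(a)$. Let $$\mu_t^{exp}(a)=\frac{e^{\gamma_tR(a)}}{\sum_{a'}e^{\gamma_tR(a')}},\qquad\rho_t^{exp}(a)=\frac{e^{\gamma_t\hat R_t(a)}}{\sum_{a'}e^{\gamma_t\hat R_t(a')}}.$$ Then $$KL(\rho_t^{exp}\|\mu_t^{exp})\le\gamma_t\Big(\big[\Delta(\rho_t^{exp})-\hat\Delta_t(\rho_t^{exp})\big]+\big[\hat\Delta_t(\mu_t^{exp})-\Delta(\mu_t^{exp})\big]\Big).$$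
   Context: $KL(\rho\|\mu)=\sum_a\rho(a)\ln\frac{\rho(a)}{\mu(a)}$ is the Kullback–Leibler divergence. In the paper $R(a)$ is the expected reward of arm $a$ and $\hat R_t(a)$ an importance-weighted empirical estimate, but the inequality holds for arbitrary real values. *)

(* Defs.v *)
From mathcomp Require Import all_boot all_order all_algebra.
From mathcomp Require Import all_classical all_reals all_analysis.
Set Implicit Arguments. Unset Strict Implicit. Unset Printing Implicit Defensive.
Import Order.TTheory GRing.Theory Num.Theory.
Local Open Scope ring_scope.

Definition gibbs (R : realType) (A : finType) (g : R) (f : A -> R) (a : A) : R :=
  expR (g * f a) / \sum_(a' : A) expR (g * f a').

Definition KL (R : realType) (A : finType) (rho mu : A -> R) : R :=
  \sum_(a : A) rho a * ln (rho a / mu a).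

Definition gap (R : realType) (A : finType) (f : A -> R) (astar a : A) : R :=
  f astar - f a.

Definition gapd (R : realType) (A : finType) (f : A -> R) (astar : A) (rho : A -> R) : R :=
  \sum_(a : A) rho a * gap f astar a.

(* Main.v *)
Require Import Defs.
From mathcomp Require Import all_boot all_order all_algebra.
From mathcomp Require Import all_classical all_reals all_analysis.
From mathcomp Require Import ring lra.
Import Order.TTheory GRing.Theory Num.Theory.
Local Open Scope ring_scope.
Set Implicit Arguments. Unset Strict Implicit.

Lemma sum_lin (R : realType) (A : finType) (r f g : A -> R) (x y z : R) :
  \sum_a r a * (x * f a + y * g a + z) =
  x * (\sum_a r a * f a) + y * (\sum_a r a * g a) + z * (\sum_a r a).
Proof.
rewrite !mulr_sumr -!big_split /=; apply: eq_bigr => a _; ring.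
Qed.

Lemma Z_gt0 (R : realType) (A : finType) (a0 : A) (g : R) (f : A -> R) :
  0 < \sum_(a : A) expR (g * f a).
Proof.
rewrite (bigD1 a0) //=; apply/ltr_pwDl; first exact: expR_gt0.
by apply: sumr_ge0 => i _; apply/ltW/expR_gt0.
Qed.

Lemma gibbs_sum (R : realType) (A : finType) (a0 : A) (g : R) (f : A -> R) :
  \sum_a gibbs g f a = 1.
Proof.
by rewrite /gibbs -mulr_suml divff // lt0r_neq0 // (Z_gt0 a0).
Qed.

Lemma gibbs_gt0 (R : realType) (A : finType) (a0 : A) (g : R) (f : A -> R) a :
  0 < gibbs g f a.
Proof. by rewrite /gibbs divr_gt0 ?expR_gt0 // (Z_gt0 a0). Qed.

Lemma ln_gibbs (R : realType) (A : finType) (a0 : A) (g : R) (f : A -> R) a :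
  ln (gibbs g f a) = g * f a + (- ln (\sum_(a : A) expR (g * f a))).
Proof.
rewrite /gibbs ln_div ?expRK //; last by rewrite posrE (Z_gt0 a0).
by rewrite posrE expR_gt0.
Qed.

Lemma gapd_eq (R : realType) (A : finType) (a0 : A) (g : R) (h f : A -> R) astar :
  gapd f astar (gibbs g h) = f astar - \sum_a gibbs g h a * f a.
Proof.
rewrite /gapd /gap.
have := sum_lin (gibbs g h) f f (-1) 0 (f astar).
rewrite (gibbs_sum a0) => E.
rewrite (eq_bigr (fun a => gibbs g h a * (-1 * f a + 0 * f a + f astar))).
  by rewrite E; ring.
move=> a _; congr (_ * _); ring.
Qed.

Theorem lemma5 (R : realType) (A : finType) (Rw Rhat : A -> R) (astar : A)
  (gamma : R) (hmax : forall a : A, Rw a <= Rw astar) (hgamma : 0 < gamma) :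
  let mu := gibbs gamma Rw in
  let rho := gibbs gamma Rhat in
  KL rho mu <=
    gamma * ((gapd Rw astar rho - gapd Rhat astar rho)
             + (gapd Rhat astar mu - gapd Rw astar mu)).
Proof.
cbv zeta; set mu := gibbs gamma Rw; set rho := gibbs gamma Rhat.
set Zh := ln (\sum_(a : A) expR (gamma * Rhat a)).
set Zw := ln (\sum_(a : A) expR (gamma * Rw a)).
have Lr a : ln (rho a / mu a) = gamma * Rhat a + (- gamma) * Rw a + (Zw - Zh).
  rewrite ln_div ?posrE ?(gibbs_gt0 astar) // !(ln_gibbs astar) -/Zh -/Zw; ring.
have Gibbs : \sum_a mu a * ln (rho a / mu a) <= 0.
  apply: (le_trans (y := \sum_a mu a * (rho a / mu a - 1))).
    apply: ler_sum => a _; apply: ler_wpM2l; first exact/ltW/(gibbs_gt0 astar).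
    have := expR_ge1Dx (ln (rho a / mu a)).
    have P : rho a / mu a \in Num.pos by rewrite posrE divr_gt0 // (gibbs_gt0 astar).
    rewrite (lnK P); lra.
  rewrite (eq_bigr (fun a => rho a - mu a)).
    by rewrite sumrB !(gibbs_sum astar) subrr.
  move=> a _; rewrite mulrBr mulr1 mulrC divfK //.
  by rewrite lt0r_neq0 // (gibbs_gt0 astar).
rewrite /KL (eq_bigr _ (fun a _ => congr1 (fun t => rho a * t) (Lr a))) in Gibbs *.
rewrite (eq_bigr _ (fun a _ => congr1 (fun t => mu a * t) (Lr a))) in Gibbs.
rewrite !sum_lin !(gibbs_sum astar) in Gibbs *.
rewrite !(gapd_eq astar).
lra.
Qed.
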